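(* For $g\ge 1$ let $\phi_g$ be the number of maximum matchings of $\mathcal{F}_g\setminus\{v_1,v_2\}$, let $\varphi_g$ be the number of maximum matchings of $\mathcal{F}_g\setminus\{v_1\}$, and let $\theta_g$ be the number of maximum matchings of $\mathcal{F}_g$. Then $\phi_1=1$, $\varphi_1=2$, $\theta_1=2$, and for all $g\ge 1$, $$\phi_{g+1}=4\phi_g^2\varphi_g^2,\qquad \varphi_{g+1}=4\phi_g^2\varphi_g\theta_g+4\phi_g\varphi_g^3,\qquad \theta_{g+1}=2\phi_g^2\theta_g^2+2\varphi_g^4+12\phi_g\varphi_g^2\theta_g .$$
   Context: The graphs $\mathcal{F}_g$ with four distinguished ''hub'' vertices $v_1,v_2,v_3,v_4$ are defined recursively. $\mathcal{F}_1$ is the 4-cycle with edges $\{v_1,v_3\},\{v_3,v_2\},\{v_2,v_4\},\{v_4,v_1\}$ (so $v_1,v_2$ are diagonal, and $v_3,v_4$ are diagonal). For $g>1$, take four disjoint copies $\mathcal{F}_{g-1}^{(i)}$, $i=1,2,3,4$, of $\mathcal{F}_{g-1}$, with hubs $v_k^{(i)}$ corresponding to $v_k$; then identify $v_1^{(1)}$ with $v_1^{(4)}$ to form the hub $v_1$ of $\mathcal{F}_g$, identify $v_2^{(2)}$ with $v_1^{(3)}$ to form $v_2$, identify $v_2^{(1)}$ with $v_1^{(2)}$ to form $v_3$, and identify $v_2^{(3)}$ with $v_2^{(4)}$ to form $v_4$. (Equivalently, $\mathcal{F}_g$ arises from $\mathcal{F}_{g-1}$ by replacing each edge $\{u,v\}$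 by two new vertices each adjacent to both $u$ and $v$, deleting the edge $\{u,v\}$.) For a graph $G$ and vertex set $S$, $G\setminus S$ denotes the subgraph induced on the vertices not in $S$. A maximum matching is a matching of maximum cardinality. *)

(* Defs.v *)
From mathcomp Require Import all_boot.
Set Implicit Arguments. Unset Strict Implicit. Unset Printing Implicit Defensive.

(* G \ S is the subgraph induced on the vertices outside S. *)
Definition is_matching (T : finType) (e : rel T) (S : {set T})
    (M : {set {set T}}) : bool :=
  [forall E in M, exists u, exists v,
      [&& E == [set u; v], u != v, e u v, u \notin S & v \notin S]] &&
  [forall E1 in M, forall E2 in M, (E1 != E2) ==> [disjoint E1 & E2]].

Definition num_max_matchings (T : finType) (e : rel T) (S : {set T}) : nat :=
  #|[set M : {set {set T}} | is_matching e S M &&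
      [forall M' : {set {set T}}, is_matching e S M' ==> (#|M'| <= #|M|)]]|.

(* A graph is encoded as (number of vertices n, list of edges on 0..n-1).
   Hubs: v1 = 0, v2 = 1, v3 = 2, v4 = 3.
   F_1: the 4-cycle v1 - v3 - v2 - v4 - v1. *)
Definition F1data : nat * seq (nat * nat) := (4, [:: (0, 2); (2, 1); (1, 3); (3, 0)]).

Definition subdivide (d : nat * seq (nat * nat)) : nat * seq (nat * nat) :=
  let: (n, es) := d in
  (n + 2 * size es,
   flatten [seq let: (k, (u, v)) := p in
              [:: (u, n + 2 * k); (n + 2 * k, v); (u, n + 2 * k + 1); (n + 2 * k + 1, v)]
           | p <- zip (iota 0 (size es)) es]).

(* Fdata g = data of F_g for g >= 1 (Fdata 0 is unused, set to F_1) *)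
Definition Fdata (g : nat) : nat * seq (nat * nat) := iter g.-1 subdivide F1data.

Definition Fvert (g : nat) : finType := 'I_(Fdata g).1.

Definition Fadj (g : nat) : rel (Fvert g) :=
  fun x y => ((val x, val y) \in (Fdata g).2) || ((val y, val x) \in (Fdata g).2).

Definition hubs12 (g : nat) : {set Fvert g} := [set x : Fvert g | val x \in [:: 0; 1]].
Definition hub1 (g : nat) : {set Fvert g} := [set x : Fvert g | val x == 0].

Definition Fphi (g : nat) : nat := num_max_matchings (@Fadj g) (hubs12 g).
Definition Fvarphi (g : nat) : nat := num_max_matchings (@Fadj g) (hub1 g).
Definition Ftheta (g : nat) : nat := num_max_matchings (@Fadj g) set0.

(* Main.v *)
Require Import Defs.
From mathcomp Require Import all_boot.
From mathcomp Require Import zify ring.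
Set Implicit Arguments. Unset Strict Implicit. Unset Printing Implicit Defensive.



Definition blk (n k : nat) (e : nat * nat) (j : nat) : nat * nat :=
  nth (0,0) [:: (e.1, n + 2 * k); (n + 2 * k, e.2); (e.1, n + 2 * k + 1); (n + 2 * k + 1, e.2)] j.

Definition subaux (n k0 : nat) (es : seq (nat * nat)) :=
  flatten [seq let: (k, (u, v)) := p in
              [:: (u, n + 2 * k); (n + 2 * k, v); (u, n + 2 * k + 1); (n + 2 * k + 1, v)]
           | p <- zip (iota k0 (size es)) es].

Lemma subaux_size n k0 es : size (subaux n k0 es) = 4 * size es.
Proof.
elim: es k0 => [|[u v] es IH] k0 //=.
rewrite /subaux /= -/(subaux n k0.+1 es) IH /=. lia.
Qed.

Lemma subaux_nth n k0 es k j : k < size es -> j < 4 ->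
  nth (0,0) (subaux n k0 es) (4 * k + j) = blk n (k0 + k) (nth (0,0) es k) j.
Proof.
elim: es k0 k => [|[u v] es IH] k0 k //= Hk Hj.
rewrite /subaux /= -/(subaux n k0.+1 es).
case: k Hk => [|k] Hk.
  by clear IH; rewrite addn0 muln0 add0n; case: j Hj => [|[|[|[|]]]].
rewrite (_ : 4 * k.+1 + j = (4 * k + j).+4); last by lia.
by rewrite /= IH // addSnnS.
Qed.

Lemma sub_eq d : (subdivide d).2 = subaux d.1 0 d.2.
Proof. by case: d. Qed.
Lemma sub_n d : (subdivide d).1 = d.1 + 2 * size d.2.
Proof. by case: d. Qed.


Notation X := (bool * bool)%type.
Definition contrib (e : nat * nat) (x : X) (v : nat) : nat :=
  (e.1 == v) * x.1 + (e.2 == v) * x.2.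
Definition cntv (K : finType) (E : K -> nat * nat) (p : {ffun K -> X}) (v : nat) : nat :=
  \sum_(k : K) contrib (E k) (p k) v.
Definition validB (K : finType) (E : K -> nat * nat) (N : nat) (ok : nat -> nat -> bool)
  (p : {ffun K -> X}) : bool := all (fun v => ok v (cntv E p v)) (iota 0 N).
Definition Bw (K : finType) (E : K -> nat * nat) (N : nat) (ok : nat -> nat -> bool)
  (w : X -> nat) : nat :=
  \sum_(p : {ffun K -> X} | validB E N ok p) \prod_(k : K) w (p k).

Lemma Bw_reindex (K1 K2 : finType) (h : K1 -> K2) (E1 : K1 -> nat * nat) (E2 : K2 -> nat * nat) N ok w :
  bijective h -> (forall k, E2 (h k) = E1 k) -> Bw E2 N ok w = Bw E1 N ok w.
Proof.
move=> [hi hK hiK] HE.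
have bh : {on [pred i | true], bijective h} by exists hi.
rewrite /Bw (reindex (fun p : {ffun K1 -> X} => [ffun k2 => p (hi k2)])) /=.
  apply: eq_big => [p|p _].
    rewrite /validB; apply: eq_all => v; congr (ok v _).
    rewrite /cntv (reindex h) //=; apply: eq_bigr => k _; by rewrite ffunE hK HE.
  rewrite (reindex h) //=; apply: eq_bigr => k _; by rewrite ffunE hK.
exists (fun p2 : {ffun K2 -> X} => [ffun k1 => p2 (h k1)]) => p _; apply/ffunP => k;
  by rewrite !ffunE ?hK ?hiK.
Qed.

Lemma Bw_ext (K : finType) (E : K -> nat * nat) N ok1 ok2 w1 w2 :
  (forall v c, v < N -> ok1 v c = ok2 v c) -> (forall x, w1 x = w2 x) ->
  Bw E N ok1 w1 = Bw E N ok2 w2.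
Proof.
move=> Hok Hw; rewrite /Bw; apply: eq_big => [p|p _].
  rewrite /validB; apply: eq_in_all => v; rewrite mem_iota add0n => /andP[_ Hv]; exact: Hok.
by apply: eq_bigr => k _; rewrite Hw.
Qed.


Definition j0 : 'I_4 := @Ordinal 4 0 isT.
Definition j1 : 'I_4 := @Ordinal 4 1 isT.
Definition j2 : 'I_4 := @Ordinal 4 2 isT.
Definition j3 : 'I_4 := @Ordinal 4 3 isT.

Lemma sum4 (f : 'I_4 -> nat) : \sum_(j < 4) f j = f j0 + f j1 + f j2 + f j3.
Proof.
rewrite !big_ord_recr big_ord0 /= add0n.
by congr (_ + _ + _ + _); congr f; apply: val_inj.
Qed.

Lemma prod4 (f : 'I_4 -> nat) : \prod_(j < 4) f j = f j0 * f j1 * f j2 * f j3.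
Proof.
rewrite !big_ord_recr big_ord0 /= mul1n.
by congr (_ * _ * _ * _); congr f; apply: val_inj.
Qed.

Definition Ed (es : seq (nat * nat)) (k : 'I_(size es)) : nat * nat := nth (0,0) es k.

Definition Uq (q : {ffun 'I_4 -> X}) : nat := (q j0).1 + (q j2).1.
Definition Vq (q : {ffun 'I_4 -> X}) : nat := (q j1).2 + (q j3).2.
Definition Xq (q : {ffun 'I_4 -> X}) : nat := (q j0).2 + (q j1).1.
Definition Yq (q : {ffun 'I_4 -> X}) : nat := (q j2).2 + (q j3).1.

Definition lv (okN : nat -> bool) (a : X) (q : {ffun 'I_4 -> X}) : bool :=
  [&& Uq q == a.1, Vq q == a.2, okN (Xq q) & okN (Yq q)].

Definition T (okN : nat -> bool) (w : X -> nat) (a : X) : nat :=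
  \sum_(q : {ffun 'I_4 -> X} | lv okN a q) \prod_(j < 4) w (q j).

Lemma sumblk n k e (q : {ffun 'I_4 -> X}) v :
  \sum_(j < 4) contrib (blk n k e j) (q j) v =
  (e.1 == v) * Uq q + (e.2 == v) * Vq q + (n + 2 * k == v) * Xq q + (n + 2 * k + 1 == v) * Yq q.
Proof. rewrite sum4 /contrib /blk /Uq /Vq /Xq /Yq /=; ring. Qed.

Lemma Bw_curry m N ok w (E : 'I_m * 'I_4 -> nat * nat) :
  Bw E N ok w =
  \sum_(P : {ffun 'I_m -> {ffun 'I_4 -> X}} |
          all (fun v => ok v (\sum_k \sum_j contrib (E (k, j)) (P k j) v)) (iota 0 N))
     \prod_k \prod_j w (P k j).
Proof.
rewrite /Bw (reindex (fun P : {ffun 'I_m -> {ffun 'I_4 -> X}} => [ffun kj => P kj.1 kj.2])) /=.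
  apply: eq_big => [P|P _].
    apply: eq_all => v; congr (ok v _); rewrite /cntv pair_bigA.
    by apply: eq_bigr => -[k j] _; rewrite ffunE.
  by rewrite pair_bigA; apply: eq_bigr => -[k j] _; rewrite ffunE.
exists (fun p : {ffun 'I_m * 'I_4 -> X} => [ffun k => [ffun j => p (k, j)]]) => p _.
  by apply/ffunP => k; apply/ffunP => j; rewrite !ffunE.
by apply/ffunP => -[k j]; rewrite !ffunE.
Qed.

Lemma all_new (f : nat -> bool) N m :
  all f (iota N (2 * m)) = all (fun k => f (N + 2 * k) && f (N + 2 * k + 1)) (iota 0 m).
Proof.
elim: m => [|m IH] //.
rewrite (_ : 2 * m.+1 = 2 * m + 2); last by lia.
rewrite iotaD all_cat IH -(addn1 m) (iotaD 0 m 1) all_cat /= !andbT add0n.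
by rewrite addn1.
Qed.

Lemma eq_le1 (x : nat) : (x == (x == 1 :> nat) :> nat) = (x <= 1).
Proof. by case: x => [|[|x]]. Qed.

Lemma eq1_le1 (x : nat) : x <= 1 -> ((x == 1 :> nat) : nat) = x.
Proof. by case: x => [|[|x]]. Qed.


Section L1.
Variables (n : nat) (es : seq (nat * nat)).
Let m := size es.
Hypothesis Hend : forall k, k < m -> (nth (0,0) es k).1 < n /\ (nth (0,0) es k).2 < n.

Definition cntP (P : {ffun 'I_m -> {ffun 'I_4 -> X}}) v :=
  \sum_(k < m) \sum_(j < 4) contrib (blk n k (nth (0,0) es k) j) (P k j) v.
Definition cntO (P : {ffun 'I_m -> {ffun 'I_4 -> X}}) v :=
  \sum_(k < m) (((@Ed es k).1 == v) * Uq (P k) + ((@Ed es k).2 == v) * Vq (P k)).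
Definition der (P : {ffun 'I_m -> {ffun 'I_4 -> X}}) : {ffun 'I_m -> X} :=
  [ffun k => (Uq (P k) == 1, Vq (P k) == 1)].

Lemma cntP_old P v : v < n -> cntP P v = cntO P v.
Proof.
move=> Hv; apply: eq_bigr => k _; rewrite sumblk.
have -> : (n + 2 * k == v) = false by apply/eqP; lia.
have -> : (n + 2 * k + 1 == v) = false by apply/eqP; lia.
by rewrite !mul0n !addn0.
Qed.

Lemma cntP_new P (k : 'I_m) : cntP P (n + 2 * k) = Xq (P k) /\ cntP P (n + 2 * k + 1) = Yq (P k).
Proof.
have Hk := Hend (ltn_ord k).
have H0 : forall t, (t == n + 2 * k) || (t == n + 2 * k + 1) -> \sum_(k' < m | k' != k) \sum_(j < 4) contrib (blk n k' (nth (0,0) es k') j) (P k' j) t = 0.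
  move=> t /orP Ht; apply: big1 => k' Hk'; rewrite sumblk.
  have Hk2 := Hend (ltn_ord k').
  have Hne : (k' : nat) != k by [].
  have -> : ((nth (0,0) es k').1 == t) = false by apply/eqP; case: Ht => /eqP; lia.
  have -> : ((nth (0,0) es k').2 == t) = false by apply/eqP; case: Ht => /eqP; lia.
  have -> : (n + 2 * k' == t) = false by apply/eqP; move/eqP: Hne; case: Ht => /eqP; lia.
  have -> : (n + 2 * k' + 1 == t) = false by apply/eqP; move/eqP: Hne; case: Ht => /eqP; lia.
  by [].
split.
  rewrite /cntP (bigD1 k) //= (H0 _ _) ?eqxx // addn0 sumblk.
  have -> : ((nth (0,0) es k).1 == n + 2 * k) = false by apply/eqP; lia.
  have -> : ((nth (0,0) es k).2 == n + 2 * k) = false by apply/eqP; lia.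
  have -> : (n + 2 * k + 1 == n + 2 * k) = false by apply/eqP; lia.
  by rewrite eqxx /=; lia.
rewrite /cntP (bigD1 k) //= (H0 _ _) ?eqxx ?orbT // addn0 sumblk.
have -> : ((nth (0,0) es k).1 == n + 2 * k + 1) = false by apply/eqP; lia.
have -> : ((nth (0,0) es k).2 == n + 2 * k + 1) = false by apply/eqP; lia.
have -> : (n + 2 * k == n + 2 * k + 1) = false by apply/eqP; lia.
by rewrite eqxx /=; lia.
Qed.


Variables (okO : nat -> nat -> bool) (okN : nat -> bool).
Hypothesis HokO : forall v c, v < n -> okO v c -> c <= 1.

Definition okL1 (v c : nat) : bool := if v < n then okO v c else okN c.
Definition LVP (P : {ffun 'I_m -> {ffun 'I_4 -> X}}) : bool :=
  all (fun v => okL1 v (cntP P v)) (iota 0 (n + 2 * m)).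

Lemma LVP_iff (P : {ffun 'I_m -> {ffun 'I_4 -> X}}) : LVP P = all (fun v => okO v (cntO P v)) (iota 0 n) &&
   [forall k : 'I_m, okN (Xq (P k)) && okN (Yq (P k))].
Proof.
rewrite /LVP iotaD all_cat add0n all_new; congr andb.
  apply: eq_in_all => v; rewrite mem_iota => /andP [_ Hv] /=.
  by rewrite /okL1 ifT // cntP_old.
apply/allP/forallP.
  move=> H k; have := H k; rewrite mem_iota ltn_ord /= => /(_ isT) /andP[].
  rewrite /okL1 !ifF; try (apply/negbTE; rewrite -leqNgt; lia).
  by case: (cntP_new P k) => -> ->; move=> -> ->.
move=> H k; rewrite mem_iota /= => Hk.
have := H (Ordinal Hk); case: (cntP_new P (Ordinal Hk)) => /= <- <-.
rewrite /okL1 !ifF //; apply/negbTE; rewrite -leqNgt; lia.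
Qed.

Lemma Ubound (P : {ffun 'I_m -> {ffun 'I_4 -> X}}) (k : 'I_m) : all (fun v => okO v (cntO P v)) (iota 0 n) ->
  Uq (P k) <= 1 /\ Vq (P k) <= 1.
Proof.
move=> /allP H; have [H1 H2] := Hend (ltn_ord k).
have G : forall v, v < n -> cntO P v <= 1.
  by move=> v Hv; apply: (HokO Hv); apply: H; rewrite mem_iota.
split.
  have := G _ H1; rewrite /cntO (bigD1 k) //= /Ed eqxx mul1n; lia.
have := G _ H2; rewrite /cntO (bigD1 k) //= /Ed eqxx mul1n; lia.
Qed.

Lemma cnt_der (P : {ffun 'I_m -> {ffun 'I_4 -> X}}) v : (forall k, Uq (P k) <= 1 /\ Vq (P k) <= 1) ->
  cntv (@Ed es) (der P) v = cntO P v.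
Proof.
move=> Hb; apply: eq_bigr => k _; rewrite /contrib ffunE /=.
by case: (Hb k) => B1 B2; rewrite !eq1_le1.
Qed.

Lemma key (P : {ffun 'I_m -> {ffun 'I_4 -> X}}) (p : {ffun 'I_m -> X}) : (validB (@Ed es) n okO p && (P \in family (fun k => lv okN (p k)))) =
   (p == der P) && LVP P.
Proof.
apply/idP/idP.
  case/andP => Hv /familyP Hf.
  have Hp : p = der P.
    apply/ffunP => k; rewrite ffunE; move: (Hf k) => /and4P [/eqP HU /eqP HV _ _].
    by rewrite HU HV; case: (p k) => [[] []].
  have Hb : forall k, Uq (P k) <= 1 /\ Vq (P k) <= 1.
    move=> k; move: (Hf k); rewrite Hp /lv ffunE unfold_in /= !eq_le1 => /and4P[]; by [].
  rewrite Hp eqxx /= LVP_iff; apply/andP; split.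
    have Hv' : validB (@Ed es) n okO (der P) by rewrite -Hp.
    apply/allP => v Hv2; rewrite -cnt_der //; exact: (allP Hv' v Hv2).
  by apply/forallP => k; move: (Hf k) => /and4P [_ _ -> ->].
case/andP => /eqP -> HL; move: (HL); rewrite LVP_iff => /andP [HO /forallP HN].
have Hb := fun k => Ubound k HO.
apply/andP; split.
  by apply/allP => v Hv; rewrite cnt_der //; exact: (allP HO v Hv).
apply/familyP => k; rewrite unfold_in /lv ffunE /= !eq_le1.
by case: (Hb k) => -> ->; move: (HN k) => /andP [-> ->].
Qed.

Lemma L1 w : Bw (@Ed (subaux n 0 es)) (n + 2 * m) okL1 w = Bw (@Ed es) n okO (T okN w).
Proof.
have hlt : forall (k : 'I_m) (j : 'I_4), 4 * k + j < size (subaux n 0 es).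
  by move=> k j; rewrite subaux_size; have := ltn_ord k; have := ltn_ord j; lia.
pose h := fun kj : 'I_m * 'I_4 => Ordinal (hlt kj.1 kj.2).
rewrite (@Bw_reindex _ _ h (fun kj => blk n kj.1 (nth (0,0) es kj.1) kj.2)); first last.
    by move=> [k j]; rewrite /Ed /= subaux_nth.
  apply: inj_card_bij.
    move=> [k j] [k' j'] /(congr1 val) /= H.
    have := ltn_ord j; have := ltn_ord j' => Hj Hj'.
    have e1 : (k : nat) = k' by lia.
    have e2 : (j : nat) = j' by lia.
    by rewrite (val_inj e1) (val_inj e2).
  by rewrite card_prod !card_ord subaux_size; lia.
rewrite Bw_curry /Bw.
under [RHS]eq_bigr => p _ do rewrite /T bigA_distr_big_dep.
rewrite (exchange_big_dep predT) //=.
rewrite [LHS]big_mkcond /=; apply: eq_bigr => P _.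
rewrite (eq_bigl _ _ (key P)).
have -> : all (fun v => okL1 v (\sum_(k < m) \sum_(j < 4) contrib (blk n (k, j).1 (nth (0,0) es (k, j).1) (k, j).2) (P k j) v)) (iota 0 (n + 2 * m)) = LVP P by [].
case: (LVP P).
  by rewrite (big_pred1 (der P)) // => p; rewrite andbT.
by rewrite big_pred0 // => p; rewrite andbF.
Qed.

End L1.



Definition okS (S : seq nat) (n0 v c : nat) : bool :=
  if v < n0 then c == (v \notin S) else c <= 1.
Definition we (a : X) : nat := a.1 == a.2.

Lemma sum_eqn (a n : nat) : \sum_(v < n) ((a == v :> nat) : nat) = (a < n).
Proof.
elim: n => [|n IH]; first by rewrite big_ord0.
rewrite big_ord_recr /= IH ltnS.
by case: ltngtP.
Qed.

Section L2.
Variables (N n0 : nat) (es : seq (nat * nat)) (S : seq nat).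
Let m := size es.
Let E (k : 'I_m) := @Ed es k.
Hypothesis Hlt : forall k : 'I_m, (E k).1 < N /\ (E k).2 < N.
Hypothesis Hbip : forall k : 'I_m, ((E k).1 < n0) != ((E k).2 < n0).
Hypothesis Huniq : forall k k' : 'I_m,
  ((E k).1 == (E k').1) && ((E k).2 == (E k').2) || ((E k).1 == (E k').2) && ((E k).2 == (E k').1) ->
  k = k'.
Hypothesis HS : forall s, s \in S -> s < n0.
Hypothesis Hn0 : n0 <= N.

Definition adjE : rel 'I_N := fun x y => ((val x, val y) \in es) || ((val y, val x) \in es).
Definition SS : {set 'I_N} := [set x | val x \in S].
Definition incid (k : 'I_m) (v : nat) := ((E k).1 == v) || ((E k).2 == v).
Definition eset (k : 'I_m) : {set 'I_N} := [set x : 'I_N | incid k x].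
Definition OldS : {set 'I_N} := [set x : 'I_N | (val x < n0) && (val x \notin S)].
Definition N0 := #|OldS|.
Definition ismatch (M : {set {set 'I_N}}) := is_matching adjE SS M.
Definition phi (p : {ffun 'I_m -> X}) : {set {set 'I_N}} := eset @: [set k | (p k).1].
Definition okL := okS S n0.
Definition diag (p : {ffun 'I_m -> X}) := [forall k, (p k).1 == (p k).2].
Definition D := [set p : {ffun 'I_m -> X} | validB E N okL p && diag p].

Lemma E_neq k : (E k).1 != (E k).2.
Proof. by apply/eqP => H; move: (Hbip k); rewrite H eqxx. Qed.

Lemma okL_le1 v c : okL v c -> c <= 1.
Proof. by rewrite /okL /okS; case: ifP => _ // /eqP ->; case: (v \notin S). Qed.

Lemma cnt_ge (p : {ffun 'I_m -> X}) v (k : 'I_m) : contrib (E k) (p k) v <= cntv E p v.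
Proof. by rewrite /cntv (bigD1 k) //= leq_addr. Qed.

Lemma cnt_ge2 (p : {ffun 'I_m -> X}) v (k k' : 'I_m) : k != k' ->
  contrib (E k) (p k) v + contrib (E k') (p k') v <= cntv E p v.
Proof.
move=> Hne; rewrite /cntv (bigD1 k) //= (bigD1 k') /=; first lia.
by rewrite eq_sym.
Qed.

Lemma cnt_diag (p : {ffun 'I_m -> X}) v : diag p -> cntv E p v = #|[pred k | (p k).1 && incid k v]|.
Proof.
move=> /forallP Hd; rewrite -sum1_card [RHS]big_mkcond /=; apply: eq_bigr => k _.
rewrite /contrib /incid -(eqP (Hd k)).
have := E_neq k.
rewrite inE /=; move: (E k) => [a b] /=; case: ((p k).1); case: (a =P v) => [->|_]; case: (b =P v) => [->|_] //=; rewrite ?eqxx //.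
Qed.

Lemma valid_at (p : {ffun 'I_m -> X}) v : validB E N okL p -> v < N -> okL v (cntv E p v).
Proof. by move=> /allP H Hv; apply: H; rewrite mem_iota. Qed.

Lemma mem_eset k x : (x \in eset k) = incid k x.
Proof. by rewrite inE. Qed.

Lemma eset_two k : eset k = [set Ordinal (proj1 (Hlt k)); Ordinal (proj2 (Hlt k))].
Proof.
apply/setP => x; rewrite !inE /incid -!val_eqE /=.
by rewrite ![_ == val x]eq_sym.
Qed.

Lemma eset_inj : injective eset.
Proof.
move=> k k' Heq; apply: Huniq.
have Ha : Ordinal (proj1 (Hlt k)) \in eset k' by rewrite -Heq mem_eset /incid eqxx.
have Hb : Ordinal (proj2 (Hlt k)) \in eset k' by rewrite -Heq mem_eset /incid eqxx orbT.
move: Ha Hb; rewrite !mem_eset /incid /=.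
have := E_neq k; have := E_neq k'.
by do 4 case: eqP => //=; move=> *; lia.
Qed.

Lemma adj_edge u v : adjE u v -> exists k : 'I_m, eset k = [set u; v].
Proof.
have key : forall a b : 'I_N, (val a, val b) \in es -> exists k : 'I_m, eset k = [set a; b].
  move=> a b Hab; have Hk : index (val a, val b) es < m by rewrite index_mem.
  exists (Ordinal Hk); apply/setP => x; rewrite mem_eset /incid !inE /E /Ed /= nth_index //=.
  by rewrite -!val_eqE /= ![_ == val x]eq_sym.
case/orP => H; first exact: key.
by have [k Hk] := key _ _ H; exists k; rewrite Hk setUC.
Qed.


Lemma match_elt M A : ismatch M -> A \in M ->
  exists u, exists v, [/\ A = [set u; v], u != v, adjE u v, u \notin SS & v \notin SS].
Proof.
case/andP => /forallP H _ HA; move: (H A); rewrite HA /=.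
by move=> /existsP [u /existsP [v /and5P [/eqP -> ? ? ? ?]]]; exists u, v.
Qed.

Lemma match_disj M A B x : ismatch M -> A \in M -> B \in M -> x \in A -> x \in B -> A = B.
Proof.
case/andP => _ /forallP H HA HB xA xB; move: (H A); rewrite HA /= => /forallP /(_ B).
rewrite HB /=; case: (eqVneq A B) => // _ /= Hd.
by move: (disjointFr Hd xA); rewrite xB.
Qed.

Lemma match_edge M A : ismatch M -> A \in M -> exists k, A = eset k.
Proof.
move=> HM HA; have [u [v [-> _ Hadj _ _]]] := match_elt HM HA.
by have [k Hk] := adj_edge Hadj; exists k.
Qed.

Definition oe (A : {set 'I_N}) : option 'I_N := [pick x in A | val x < n0].

Lemma eset_old k : exists x, x \in eset k /\ val x < n0.
Proof.
have := Hbip k; case H1: ((E k).1 < n0) => /= H2.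
  by exists (Ordinal (proj1 (Hlt k))); rewrite mem_eset /incid eqxx.
exists (Ordinal (proj2 (Hlt k))); rewrite mem_eset /incid eqxx orbT; split => //.
by move: H2; rewrite negbK.
Qed.

Lemma oe_spec M A : ismatch M -> A \in M ->
  exists x, [/\ oe A = Some x, x \in A, val x < n0 & x \notin SS].
Proof.
move=> HM HA; have [u [v [HAuv _ _ Hu Hv]]] := match_elt HM HA.
have [k Hk] := match_edge HM HA.
have [x [xk xl]] := eset_old k.
rewrite /oe; case: pickP => [y /andP [yA yl] | H].
  exists y; split => //; move: yA; rewrite HAuv !inE => /orP [] /eqP ->.
    by move: Hu; rewrite inE.
  by move: Hv; rewrite inE.
by move: (H x); rewrite Hk xk xl.
Qed.

Lemma oe_inj M : ismatch M -> {in M &, injective oe}.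
Proof.
move=> HM A B HA HB Heq.
have [x [Hx xA _ _]] := oe_spec HM HA.
have [y [Hy yB _ _]] := oe_spec HM HB.
move: Heq; rewrite Hx Hy => -[Exy]; subst y.
exact: (match_disj HM HA HB xA yB).
Qed.

Lemma oe_sub M : ismatch M -> oe @: M \subset Some @: OldS.
Proof.
move=> HM; apply/subsetP => o /imsetP [A HA ->].
have [x [-> _ xl xS]] := oe_spec HM HA.
by apply: imset_f; rewrite inE xl; move: xS; rewrite inE.
Qed.

Lemma match_le M : ismatch M -> #|M| <= N0.
Proof.
move=> HM; rewrite -(card_in_imset (oe_inj HM)).
apply: leq_trans (subset_leq_card (oe_sub HM)) _.
by rewrite card_imset //; exact: Some_inj.
Qed.

Lemma cover M : ismatch M -> #|M| = N0 -> forall x, x \in OldS -> exists2 A, A \in M & x \in A.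
Proof.
move=> HM HN x Hx.
have Hc : #|oe @: M| = #|Some @: OldS|.
  by rewrite (card_in_imset (oe_inj HM)) card_imset //; exact: Some_inj.
have Heq := subset_cardP Hc (oe_sub HM).
have : Some x \in oe @: M by rewrite Heq; apply: imset_f.
case/imsetP => A HA Hox.
have [y [Hy yA _ _]] := oe_spec HM HA.
by exists A => //; move: Hox; rewrite Hy => -[->].
Qed.

Lemma contrib_pos (p : {ffun 'I_m -> X}) k v : (p k).1 -> (p k).2 -> incid k v ->
  1 <= contrib (E k) (p k) v.
Proof.
move=> h1 h2; rewrite /incid /contrib h1 h2 /= !muln1.
by case/orP => ->; rewrite ?addn1 ?add1n.
Qed.

Lemma diag2 (p : {ffun 'I_m -> X}) k : diag p -> (p k).2 = (p k).1.
Proof. by move=> /forallP /(_ k) /eqP ->. Qed.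

Lemma phi_match p : p \in D -> ismatch (phi p).
Proof.
rewrite inE => /andP [Hv Hd]; apply/andP; split.
  apply/forallP => A; apply/implyP => /imsetP [k]; rewrite inE => Hk ->.
  have [H1 H2] := Hlt k.
  apply/existsP; exists (Ordinal H1); apply/existsP; exists (Ordinal H2).
  apply/and5P; split.
  - by rewrite eset_two; apply/eqP; congr [set _; _]; apply: val_inj.
  - by rewrite -val_eqE /= E_neq.
  - apply/orP; left => /=.
    by rewrite -surjective_pairing /E /Ed mem_nth.
  - rewrite inE /=; apply/negP => HS1.
    have Hl := HS HS1.
    have := valid_at Hv (leq_trans Hl Hn0).
    rewrite /okL /okS Hl HS1 /= => /eqP H0.
    have := cnt_ge p ((E k).1) k; rewrite H0.
    have := @contrib_pos p k ((E k).1) Hk (ltac:(by rewrite diag2)) (ltac:(by rewrite /incid eqxx)).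
    lia.
  - rewrite inE /=; apply/negP => HS1.
    have Hl := HS HS1.
    have := valid_at Hv (leq_trans Hl Hn0).
    rewrite /okL /okS Hl HS1 /= => /eqP H0.
    have := cnt_ge p ((E k).2) k; rewrite H0.
    have := @contrib_pos p k ((E k).2) Hk (ltac:(by rewrite diag2)) (ltac:(by rewrite /incid eqxx orbT)).
    lia.
apply/forallP => A; apply/implyP => /imsetP [k]; rewrite inE => Hk ->.
apply/forallP => B; apply/implyP => /imsetP [k']; rewrite inE => Hk' ->.
apply/implyP => Hne.
have Hkk : k != k' by apply: contraNneq Hne => ->.
rewrite -setI_eq0; apply/eqP/setP => x; rewrite !inE.
apply/negP => /andP [xk xk'].
have := cnt_ge2 p x Hkk.
have := @contrib_pos p k x Hk (ltac:(by rewrite diag2)) xk.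
have := @contrib_pos p k' x Hk' (ltac:(by rewrite diag2)) xk'.
have := okL_le1 (valid_at Hv (ltn_ord x)).
lia.
Qed.

Lemma N0_sum : N0 = \sum_(v < n0) ((v : nat) \notin S).
Proof.
rewrite /N0 /OldS cardsE -sum1_card (big_ord_widen _ (fun v => (v \notin S) : nat) Hn0).
rewrite big_mkcond [RHS]big_mkcond /=; apply: eq_bigr => x _.
by rewrite unfold_in; case: (x < n0); case: (val x \notin S).
Qed.

Lemma phi_card p : p \in D -> #|phi p| = N0.
Proof.
rewrite inE => /andP [Hv Hd].
rewrite /phi card_imset; last exact: eset_inj.
have S1 : \sum_(v < n0) cntv E p v = \sum_(v < n0) ((v : nat) \notin S).
  apply: eq_bigr => v _.
  have := valid_at Hv (leq_trans (ltn_ord v) Hn0).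
  by rewrite /okL /okS ltn_ord => /eqP.
have S2 : \sum_(v < n0) cntv E p v = \sum_k ((p k).1 : nat).
  rewrite /cntv exchange_big /=; apply: eq_bigr => k _.
  rewrite /contrib big_split /= -!big_distrl /= !sum_eqn diag2 //.
  have := Hbip k; case: ((E k).1 < n0); case: ((E k).2 < n0) => //= _; lia.
rewrite N0_sum -S1 S2 cardsE -sum1_card [LHS]big_mkcond /=.
by apply: eq_bigr => k _; rewrite unfold_in; case: ((p k).1).
Qed.

Definition pM (M : {set {set 'I_N}}) : {ffun 'I_m -> X} := [ffun k => (eset k \in M, eset k \in M)].

Lemma pM_D M : ismatch M -> #|M| = N0 -> pM M \in D.
Proof.
move=> HM HN; rewrite inE; apply/andP; split; last first.
  by apply/forallP => k; rewrite ffunE.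
apply/allP => v; rewrite mem_iota add0n => /andP [_ HvN].
have Hdiag : diag (pM M) by apply/forallP => k; rewrite ffunE.
rewrite cnt_diag //.
set A := [pred k | _].
have HA : forall k, (k \in A) = (eset k \in M) && incid k v.
  by move=> k; rewrite inE /= ffunE.
pose x := Ordinal HvN.
have le1 : #|A| <= 1.
  apply/card_le1_eqP => k1 k2; rewrite !HA => /andP [h1 i1] /andP [h2 i2].
  have x1 : x \in eset k1 by rewrite mem_eset.
  have x2 : x \in eset k2 by rewrite mem_eset.
  by apply: eset_inj; apply: (match_disj HM h2 h1 x2 x1).
rewrite /okL /okS; case: ifP => Hvn0 //.
case: (boolP (v \in S)) => vS /=.
  apply/eqP; apply: eq_card0 => k; rewrite HA; apply/negP => /andP [h i].
  have [u [w [Heu _ _ Hu Hw]]] := match_elt HM h.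
  have : x \in eset k by rewrite mem_eset.
  rewrite Heu !inE => /orP [] /eqP Hx.
    by move: Hu; rewrite inE -Hx /= vS.
  by move: Hw; rewrite inE -Hx /= vS.
have xO : x \in OldS by rewrite inE /= Hvn0 vS.
have [B HB xB] := cover HM HN xO.
have [k Hk] := match_edge HM HB.
have : 0 < #|A|.
  apply/card_gt0P; exists k; rewrite HA -Hk HB /=.
  by move: xB; rewrite Hk mem_eset.
by rewrite eqn_leq le1.
Qed.

Lemma phi_pM M : ismatch M -> phi (pM M) = M.
Proof.
move=> HM; apply/setP => B; apply/imsetP/idP.
  by case=> k; rewrite inE ffunE => Hk ->.
move=> HB; have [k Hk] := match_edge HM HB.
by exists k => //; rewrite inE ffunE -Hk.
Qed.

Lemma phi_inj : {in D &, injective phi}.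
Proof.
move=> p1 p2; rewrite !inE => /andP [_ H1] /andP [_ H2] Heq.
apply/ffunP => k.
have e1 : (p1 k).1 = (eset k \in phi p1) by rewrite mem_imset ?inE //; exact: eset_inj.
have e2 : (p2 k).1 = (eset k \in phi p2) by rewrite mem_imset ?inE //; exact: eset_inj.
have : (p1 k).1 = (p2 k).1 by rewrite e1 e2 Heq.
move: (diag2 k H1) (diag2 k H2); case: (p1 k) => a b; case: (p2 k) => c d /=.
by move=> -> -> ->.
Qed.

Lemma prod_we (p : {ffun 'I_m -> X}) : \prod_k we (p k) = diag p.
Proof.
case: (boolP (diag p)) => H.
  by apply: big1 => k _; rewrite /we (eqP (forallP H k)) eqxx.
move: H; rewrite negb_forall => /existsP [k Hk].
by rewrite (bigD1 k) //= /we (negbTE Hk) mul0n.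
Qed.

Lemma L2 : 0 < Bw E N okL we -> num_max_matchings adjE SS = Bw E N okL we.
Proof.
have HB : Bw E N okL we = #|D|.
  rewrite /Bw /D cardsE -sum1_card [RHS]big_mkcond [LHS]big_mkcond /=.
  apply: eq_bigr => p _; rewrite unfold_in prod_we.
  by case: (validB E N okL p); case: (diag p).
rewrite HB => Hpos; rewrite /num_max_matchings.
have -> : [set M : {set {set 'I_N}} | is_matching adjE SS M &&
      [forall M' : {set {set 'I_N}}, is_matching adjE SS M' ==> (#|M'| <= #|M|)]] = phi @: D.
  have [p0 Hp0] : exists p0, p0 \in D by apply/card_gt0P.
  apply/setP => M; rewrite inE; apply/andP/imsetP.
    case=> HM /forallP Hmax.
    have h1 : N0 <= #|M|.
      rewrite -(phi_card Hp0); move/implyP: (Hmax (phi p0)); apply; exact: phi_match.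
    have HN : #|M| = N0 by apply/eqP; rewrite eqn_leq h1 match_le.
    by exists (pM M); [apply: pM_D | rewrite phi_pM].
  case=> p Hp ->; split; first exact: phi_match.
  apply/forallP => M'; apply/implyP => HM'; rewrite phi_card //; exact: match_le.
by rewrite card_in_imset //; exact: phi_inj.
Qed.

End L2.



Lemma Fdata_S g : 1 <= g -> Fdata g.+1 = subdivide (Fdata g).
Proof. by case: g. Qed.

Definition Wf (d : nat * seq (nat * nat)) :=
  forall k, k < size d.2 -> [/\ (nth (0,0) d.2 k).1 < d.1, (nth (0,0) d.2 k).2 < d.1 &
                              (nth (0,0) d.2 k).1 != (nth (0,0) d.2 k).2].

Lemma Wf_F1 : Wf F1data.
Proof. by move=> [|[|[|[|k]]]]. Qed.

Lemma blk_facts n m (e : nat * nat) a j : e.1 < n -> e.2 < n -> e.1 != e.2 -> a < m -> j < 4 ->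
  let f := blk n a e j in
  [/\ f.1 < n + 2 * m, f.2 < n + 2 * m, f.1 != f.2 & (f.1 < n) != (f.2 < n)].
Proof.
move=> h1 h2 h3 ha; rewrite /blk.
case: j => [|[|[|[|j]]]] //= _; split; apply/negP; move/eqP: h3; lia.
Qed.

Lemma sub_decomp n (es : seq (nat * nat)) (k : nat) : k < size (subaux n 0 es) ->
  k = 4 * (k %/ 4) + k %% 4 /\ k %/ 4 < size es /\ k %% 4 < 4.
Proof. rewrite subaux_size => Hk; split; [|split]; lia. Qed.

Lemma Wf_sub d : Wf d -> Wf (subdivide d).
Proof.
case: d => n es Hw; rewrite /Wf sub_eq sub_n /= => k.
rewrite subaux_size => Hk.
have Ha : k %/ 4 < size es by lia.
have Hj : k %% 4 < 4 by lia.
rewrite (divn_eq k 4) mulnC subaux_nth // add0n.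
have [h1 h2 h3] := Hw _ Ha.
by have [? ? ? _] := blk_facts h1 h2 h3 Ha Hj.
Qed.

Lemma Wf_F g : 1 <= g -> Wf (Fdata g).
Proof.
elim: g => [|g IH] // _; case: g IH => [|g] IH; first exact: Wf_F1.
by rewrite Fdata_S //; apply: Wf_sub; apply: IH.
Qed.

Lemma size_F g : 1 <= g -> 4 <= (Fdata g).1.
Proof.
elim: g => [|g IH] // _; case: g IH => [|g] IH //.
rewrite Fdata_S // sub_n; have := IH isT; lia.
Qed.

Lemma blk_uniq n (e e' : nat * nat) a a' j j' :
  e.1 < n -> e.2 < n -> e.1 != e.2 -> e'.1 < n -> e'.2 < n -> e'.1 != e'.2 ->
  j < 4 -> j' < 4 -> (a = a' -> e = e') ->
  let f := blk n a e j in let f' := blk n a' e' j' in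
  (f.1 == f'.1) && (f.2 == f'.2) || (f.1 == f'.2) && (f.2 == f'.1) ->
  4 * a + j = 4 * a' + j'.
Proof.
move=> h1 h2 /eqP h3 h1' h2' /eqP h3'; rewrite /blk.
case: j => [|[|[|[|j]]]] //= _; case: j' => [|[|[|[|j']]]] //= _ He; try lia.
all: case/orP => /andP [/eqP A /eqP B]; try lia.
all: have Ea : a = a' by lia.
all: have Ee := He Ea; subst e'; lia.
Qed.

Lemma L2_sub d S : Wf d -> (forall s, s \in S -> s < d.1) ->
  0 < Bw (@Ed (subdivide d).2) (subdivide d).1 (okL d.1 S) we ->
  num_max_matchings (adjE (N := (subdivide d).1) (subdivide d).2) (SS (subdivide d).1 S) =
  Bw (@Ed (subdivide d).2) (subdivide d).1 (okL d.1 S) we.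
Proof.
case: d => n es Hw HS /=.
have Hn : forall k : 'I_(size (subaux n 0 es)),
   Ed k = blk n (k %/ 4) (nth (0,0) es (k %/ 4)) (k %% 4) /\ k %/ 4 < size es /\ k %% 4 < 4.
  move=> k; have [Hk [Ha Hj]] := sub_decomp (ltn_ord k).
  by split => //; rewrite /Ed {1}Hk subaux_nth.
apply: L2 => //.
- move=> k; have [-> [Ha Hj]] := Hn k; have [h1 h2 h3] := Hw _ Ha.
  by have [? ? _ _] := blk_facts h1 h2 h3 Ha Hj.
- move=> k; have [-> [Ha Hj]] := Hn k; have [h1 h2 h3] := Hw _ Ha.
  by have [_ _ _ ?] := blk_facts h1 h2 h3 Ha Hj.
- move=> k k'; have [-> [Ha Hj]] := Hn k; have [-> [Ha' Hj']] := Hn k'.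
  have [h1 h2 h3] := Hw _ Ha; have [h1' h2' h3'] := Hw _ Ha'.
  move/(blk_uniq h1 h2 h3 h1' h2' h3' Hj Hj' (fun E => congr1 _ E)) => H.
  apply: val_inj => /=; rewrite (divn_eq k 4) (divn_eq k' 4) !(mulnC _ 4). exact: H.
- lia.
Qed.


Definition Xl : seq X := [:: (false,false); (false,true); (true,false); (true,true)].
Definition allX4 : seq (X * X * X * X) :=
  flatten [seq flatten [seq flatten [seq [seq (((a,b),c),d) | d <- Xl] | c <- Xl] | b <- Xl] | a <- Xl].

Definition mk (t : X * X * X * X) : {ffun 'I_4 -> X} :=
  [ffun i : 'I_4 => nth (false,false) [:: t.1.1.1; t.1.1.2; t.1.2; t.2] i].

Lemma allX4_uniq : uniq allX4. Proof. by []. Qed.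
Lemma allX4_mem t : t \in allX4.
Proof. by move: t => [[[[[] []] [[] []]] [[] []]] [[] []]]. Qed.

Lemma sumX4 (H : X * X * X * X -> nat) : \sum_(t : X * X * X * X) H t = \sum_(t <- allX4) H t.
Proof.
apply: perm_big; apply: uniq_perm; rewrite ?index_enum_uniq ?allX4_uniq //.
by move=> t; rewrite mem_index_enum allX4_mem.
Qed.

Lemma sumF4 (G : {ffun 'I_4 -> X} -> nat) :
  \sum_(p : {ffun 'I_4 -> X}) G p = \sum_(t <- allX4) G (mk t).
Proof.
rewrite -sumX4 (reindex mk) //.
exists (fun p : {ffun 'I_4 -> X} => (((p j0, p j1), p j2), p j3)) => [t _|p _].
  by move: t => [[[a b] c] d]; rewrite /mk !ffunE.
apply/ffunP => -[i Hi]; rewrite ffunE /=.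
by case: i Hi => [|[|[|[|i]]]] Hi //=; congr (p _); apply: val_inj.
Qed.

Definition cond4 (E : 'I_4 -> nat * nat) N (ok : nat -> nat -> bool) (t : X * X * X * X) : bool :=
  all (fun v => ok v (contrib (E j0) t.1.1.1 v + contrib (E j1) t.1.1.2 v +
                      contrib (E j2) t.1.2 v + contrib (E j3) t.2 v)) (iota 0 N).

Definition wprod (w : X -> nat) (t : X * X * X * X) : nat := w t.1.1.1 * w t.1.1.2 * w t.1.2 * w t.2.

Lemma Bw4L (E : 'I_4 -> nat * nat) N ok w :
  Bw E N ok w = \sum_(t <- filter (cond4 E N ok) allX4) wprod w t.
Proof.
rewrite /Bw big_mkcond sumF4 big_filter [RHS]big_mkcond; apply: eq_bigr => t _.
have E1 : validB E N ok (mk t) = cond4 E N ok t.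
  by apply: eq_all => v; rewrite /cntv sum4 /mk !ffunE.
by rewrite E1 prod4 /wprod /mk !ffunE.
Qed.

Definition lvT (okN : nat -> bool) (a : X) (t : X * X * X * X) : bool :=
  [&& t.1.1.1.1 + t.1.2.1 == a.1, t.1.1.2.2 + t.2.2 == a.2,
      okN (t.1.1.1.2 + t.1.1.2.1) & okN (t.1.2.2 + t.2.1)].

Lemma T4L okN w a : T okN w a = \sum_(t <- filter (lvT okN a) allX4) wprod w t.
Proof.
rewrite /T big_mkcond sumF4 big_filter [RHS]big_mkcond; apply: eq_bigr => t _.
have E1 : lv okN a (mk t) = lvT okN a t by rewrite /lv /Uq /Vq /Xq /Yq /mk !ffunE.
by rewrite E1 prod4 /wprod /mk !ffunE.
Qed.

Definition okA (S : seq nat) (v c : nat) : bool := c == (v \notin S).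
Definition EF1 : 'I_4 -> nat * nat := @Ed F1data.2.
Lemma BF1_01 (w : X -> nat) : w (false,true) = w (true,false) ->
  Bw (@Ed F1data.2) 4 (okA [:: 0; 1]) w = 4 * w (false,false) ^ 2 * w (true,false) ^ 2.
Proof.
move=> Hs; rewrite Bw4L (_ : filter _ _ = [:: (false, false, (true, false), (false, false), (true, false)); (false, false, (true, false), (false, true), (false, false)); (false, true, (false, false), (false, false), (true, false)); (false, true, (false, false), (false, true), (false, false))]); last by vm_compute.
rewrite !big_cons big_nil /wprod /= ?Hs; ring.
Qed.

Lemma BF1_0 (w : X -> nat) : w (false,true) = w (true,false) ->
  Bw (@Ed F1data.2) 4 (okA [:: 0]) w = 4 * w (false,false) ^ 2 * w (true,false) * w (true,true) + 4 * w (false,false) * w (true,false) ^ 3.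
Proof.
move=> Hs; rewrite Bw4L (_ : filter _ _ = [:: (false, false, (true, false), (true, false), (true, false)); (false, false, (true, false), (true, true), (false, false)); (false, false, (true, true), (false, false), (true, false)); (false, false, (true, true), (false, true), (false, false)); (false, true, (false, false), (true, false), (true, false)); (false, true, (false, false), (true, true), (false, false)); (false, true, (false, true), (false, false), (true, false)); (false, true, (false, true), (false, true), (false, false))]); last by vm_compute.
rewrite !big_cons big_nil /wprod /= ?Hs; ring.
Qed.

Lemma BF1_e (w : X -> nat) : w (false,true) = w (true,false) ->
  Bw (@Ed F1data.2) 4 (okA [::]) w = 2 * w (false,false) ^ 2 * w (true,true) ^ 2 + 2 * w (true,false) ^ 4 + 12 * w (false,false) * w (true,false) ^ 2 * w (true,true).
Proof.
move=> Hs; rewrite Bw4L (_ : filter _ _ = [:: (false, false, (true, false), (true, false), (true, true)); (false, false, (true, false), (true, true), (false, true)); (false, false, (true, true), (false, false), (true, true)); (false, false, (true, true), (false, true), (false, true)); (false, true, (false, false), (true, false), (true, true)); (false, true, (false, false), (true, true), (false, true)); (false, true, (false, true), (false, false), (true, true)); (false, true, (false, true), (false, true), (false, true)); (true, false, (true, false), (true, false), (true, false)); (true, false, (true, false), (true, true), (false, false)); (true, false, (true, true), (false, false), (true, false)); (true, false, (true, true), (false, true), (false, false)); (true, true, (false, false), (true, false), (true, false)); (true, true, (false, false), (true, true), (false, false)); (true, true, (false, true), (false, false), (true, false)); (true, true, (false, true), (false, true), (false, false))]); last by vm_compute.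
rewrite !big_cons big_nil /wprod /= ?Hs; ring.
Qed.

Lemma T_ff (w : X -> nat) : w (false,true) = w (true,false) ->
  T (fun c => c == 1) w (false,false) = 4 * w (false,false) ^ 2 * w (true,false) ^ 2.
Proof.
move=> Hs; rewrite T4L (_ : filter _ _ = [:: (false, false, (true, false), (false, false), (true, false)); (false, false, (true, false), (false, true), (false, false)); (false, true, (false, false), (false, false), (true, false)); (false, true, (false, false), (false, true), (false, false))]); last by vm_compute.
rewrite !big_cons big_nil /wprod /= ?Hs; ring.
Qed.

Lemma T_ft (w : X -> nat) : w (false,true) = w (true,false) ->
  T (fun c => c == 1) w (false,true) = 4 * w (false,false) ^ 2 * w (true,false) * w (true,true) + 4 * w (false,false) * w (true,false) ^ 3.
Proof.
move=> Hs; rewrite T4L (_ : filter _ _ = [:: (false, false, (true, false), (false, false), (true, true)); (false, false, (true, false), (false, true), (false, true)); (false, false, (true, true), (false, false), (true, false)); (false, false, (true, true), (false, true), (false, false)); (false, true, (false, false), (false, false), (true, true)); (false, true, (false, false), (false, true), (false, true)); (false, true, (false, true), (false, false), (true, false)); (false, true, (false, true), (false, true), (false, false))]); last by vm_compute.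
rewrite !big_cons big_nil /wprod /= ?Hs; ring.
Qed.

Lemma T_tf (w : X -> nat) : w (false,true) = w (true,false) ->
  T (fun c => c == 1) w (true,false) = 4 * w (false,false) ^ 2 * w (true,false) * w (true,true) + 4 * w (false,false) * w (true,false) ^ 3.
Proof.
move=> Hs; rewrite T4L (_ : filter _ _ = [:: (false, false, (true, false), (true, false), (true, false)); (false, false, (true, false), (true, true), (false, false)); (false, true, (false, false), (true, false), (true, false)); (false, true, (false, false), (true, true), (false, false)); (true, false, (true, false), (false, false), (true, false)); (true, false, (true, false), (false, true), (false, false)); (true, true, (false, false), (false, false), (true, false)); (true, true, (false, false), (false, true), (false, false))]); last by vm_compute.
rewrite !big_cons big_nil /wprod /= ?Hs; ring.
Qed.

Lemma T_tt (w : X -> nat) : w (false,true) = w (true,false) ->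
  T (fun c => c == 1) w (true,true) = 2 * w (false,false) ^ 2 * w (true,true) ^ 2 + 2 * w (true,false) ^ 4 + 12 * w (false,false) * w (true,false) ^ 2 * w (true,true).
Proof.
move=> Hs; rewrite T4L (_ : filter _ _ = [:: (false, false, (true, false), (true, false), (true, true)); (false, false, (true, false), (true, true), (false, true)); (false, false, (true, true), (true, false), (true, false)); (false, false, (true, true), (true, true), (false, false)); (false, true, (false, false), (true, false), (true, true)); (false, true, (false, false), (true, true), (false, true)); (false, true, (false, true), (true, false), (true, false)); (false, true, (false, true), (true, true), (false, false)); (true, false, (true, false), (false, false), (true, true)); (true, false, (true, false), (false, true), (false, true)); (true, false, (true, true), (false, false), (true, false)); (true, false, (true, true), (false, true), (false, false)); (true, true, (false, false), (false, false), (true, true)); (true, true, (false, false), (false, true), (false, true)); (true, true, (false, true), (false, false), (true, false)); (true, true, (false, true), (false, true), (false, false))]); last by vm_compute.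
rewrite !big_cons big_nil /wprod /= ?Hs; ring.
Qed.

Lemma Tle_val a : T (fun c => c <= 1) we a = if a == (false,false) then 1 else 2.
Proof. by move: a => [[] []]; rewrite T4L unlock; vm_compute. Qed.

Lemma base01 : Bw (@Ed F1data.2) 4 (okL 2 [:: 0; 1]) we = 1.
Proof. by rewrite Bw4L unlock; vm_compute. Qed.
Lemma base0 : Bw (@Ed F1data.2) 4 (okL 2 [:: 0]) we = 2.
Proof. by rewrite Bw4L unlock; vm_compute. Qed.
Lemma basee : Bw (@Ed F1data.2) 4 (okL 2 [::]) we = 2.
Proof. by rewrite Bw4L unlock; vm_compute. Qed.


Definition numS g S := num_max_matchings (adjE (N := (Fdata g).1) (Fdata g).2) (SS (Fdata g).1 S).

Lemma Fphi_num g : Fphi g = numS g [:: 0; 1].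
Proof. by []. Qed.
Lemma Fvarphi_num g : Fvarphi g = numS g [:: 0].
Proof.
by rewrite /Fvarphi /numS /hub1; congr num_max_matchings; apply/setP => x; rewrite !inE.
Qed.
Lemma Ftheta_num g : Ftheta g = numS g [::].
Proof.
by rewrite /Ftheta /numS; congr num_max_matchings; apply/setP => x; rewrite !inE.
Qed.

Lemma L2_F1 S : (forall s, s \in S -> s < 2) ->
  0 < Bw (@Ed F1data.2) 4 (okL 2 S) we -> numS 1 S = Bw (@Ed F1data.2) 4 (okL 2 S) we.
Proof.
move=> HS Hpos; rewrite /numS; apply: L2 => //.
- by move=> [[|[|[|[|k]]]] Hk].
- by move=> [[|[|[|[|k]]]] Hk].
- move=> [k Hk] [k' Hk'] H; apply: val_inj => /=; move: Hk Hk' H.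
  by case: k => [|[|[|[|k]]]]; case: k' => [|[|[|[|k']]]].
Qed.

Lemma top g S : 1 <= g -> (forall s, s \in S -> s < 4) ->
  Bw (@Ed (subdivide (Fdata g)).2) (subdivide (Fdata g)).1 (okL (Fdata g).1 S) we =
  Bw (@Ed (Fdata g).2) (Fdata g).1 (okA S) (T (fun c => c <= 1) we).
Proof.
move=> Hg HS; have Hw := Wf_F Hg.
case E: (Fdata g) Hw => [n es] Hw /=.
have Hend : forall k, k < size es -> (nth (0,0) es k).1 < n /\ (nth (0,0) es k).2 < n.
  by move=> k Hk; have [? ? _] := Hw _ Hk.
have HokO : forall v c, v < n -> okA S v c -> c <= 1.
  by move=> v c _ /eqP ->; case: (v \notin S).
exact: (@L1 n es Hend (okA S) (fun c => c <= 1) HokO we).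
Qed.

Lemma chain g S w : 1 <= g -> (forall s, s \in S -> s < 4) ->
  Bw (@Ed (Fdata g).2) (Fdata g).1 (okA S) w =
  Bw (@Ed F1data.2) 4 (okA S) (iter g.-1 (T (fun c => c == 1)) w).
Proof.
move=> Hg HS; elim: g Hg w => [|g IH] // _ w.
case: g IH => [|g] IH; first by [].
have Hg : 1 <= g.+1 by [].
have Hw := Wf_F Hg; have Hs4 := size_F Hg.
rewrite Fdata_S //.
have -> : iter g.+2.-1 (T (fun c => c == 1)) w = iter g.+1.-1 (T (fun c => c == 1)) (T (fun c => c == 1) w).
  exact: iterSr.
rewrite -(IH Hg).
move: Hw Hs4; case: (Fdata g.+1) => n es Hw Hs4 /=.
have Hend : forall k, k < size es -> (nth (0,0) es k).1 < n /\ (nth (0,0) es k).2 < n.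
  by move=> k Hk; have [? ? _] := Hw _ Hk.
have HokO : forall v c, v < n -> okA S v c -> c <= 1.
  by move=> v c _ /eqP ->; case: (v \notin S).
rewrite -(@L1 n es Hend (okA S) (fun c => c == 1) HokO w).
apply: Bw_ext => // v c _; rewrite /okL1 /okA; case: ifP => // Hv.
have -> : v \notin S by apply/negP => /HS; move: Hs4 Hv => /= Hs4 /negbT; lia.
by [].
Qed.


Definition W g := iter g.-1 (T (fun c => c == 1)) (T (fun c => c <= 1) we).

Lemma W_S g : 1 <= g -> W g.+1 = T (fun c => c == 1) (W g).
Proof. by case: g. Qed.

Lemma W1 a : W 1 a = if a == (false,false) then 1 else 2.
Proof. exact: Tle_val. Qed.

Lemma pos2 a b : 0 < a -> 0 < b -> 0 < a * b. Proof. by move=> ha hb; rewrite muln_gt0 ha hb. Qed.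
Lemma posX a n : 0 < a -> 0 < a ^ n. Proof. by move=> ha; rewrite expn_gt0 ha. Qed.

Lemma W_props g : 1 <= g -> [/\ W g (false,true) = W g (true,false), 0 < W g (false,false),
  0 < W g (true,false) & 0 < W g (true,true)].
Proof.
elim: g => [|g IH] // _; case: g IH => [|g] IH; first by rewrite !W1.
have [Hs h1 h2 h3] := IH isT.
rewrite W_S // T_ff // T_ft // T_tf // T_tt //; split => //.
- by apply: pos2 => //; apply: pos2 => //; apply: posX.
- by apply: ltn_addr; apply: pos2 => //; apply: pos2 => //; apply: pos2 => //; apply: posX.
- by apply: ltn_addr; apply: ltn_addr; apply: pos2 => //; apply: pos2 => //; apply: posX.
Qed.

Lemma numS_next g S : 1 <= g -> (forall s, s \in S -> s < 4) ->
  0 < Bw (@Ed F1data.2) 4 (okA S) (W g) -> numS g.+1 S = Bw (@Ed F1data.2) 4 (okA S) (W g).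
Proof.
move=> Hg HS Hp.
have E : Bw (@Ed (subdivide (Fdata g)).2) (subdivide (Fdata g)).1 (okL (Fdata g).1 S) we =
         Bw (@Ed F1data.2) 4 (okA S) (W g) by rewrite top // chain.
rewrite /numS Fdata_S // L2_sub; [by rewrite E | exact: Wf_F | | by rewrite E].
by move=> s /HS; have := size_F Hg; lia.
Qed.

Lemma F_W g : 1 <= g -> [/\ Fphi g = W g (false,false), Fvarphi g = W g (true,false) &
  Ftheta g = W g (true,true)].
Proof.
elim: g => [|g IH] // _; case: g IH => [|g] IH.
  rewrite Fphi_num Fvarphi_num Ftheta_num !W1 /=.
  rewrite !L2_F1 ?base01 ?base0 ?basee //.
  - by move=> s; rewrite !inE => /eqP ->.
  - by move=> s; rewrite !inE => /orP [] /eqP ->.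
have Hg : 1 <= g.+1 by [].
have [Hs h1 h2 h3] := W_props Hg.
have HS01 : forall s, s \in [:: 0; 1] -> s < 4 by move=> s; rewrite !inE => /orP [] /eqP ->.
have HS0 : forall s, s \in [:: 0] -> s < 4 by move=> s; rewrite !inE => /eqP ->.
have HSe : forall s, s \in [::] -> s < 4 by [].
rewrite Fphi_num Fvarphi_num Ftheta_num W_S // T_ff // T_tf // T_tt //.
rewrite !numS_next // ?BF1_01 ?BF1_0 ?BF1_e //.
- by apply: ltn_addr; apply: ltn_addr; apply: pos2 => //; apply: pos2 => //; apply: posX.
- by apply: ltn_addr; apply: pos2 => //; apply: pos2 => //; apply: pos2 => //; apply: posX.
- by apply: pos2 => //; apply: pos2 => //; apply: posX.
Qed.

Theorem theorem2 :
  [/\ Fphi 1 = 1, Fvarphi 1 = 2, Ftheta 1 = 2 &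
   forall g : nat, 1 <= g ->
     [/\ Fphi g.+1 = 4 * Fphi g ^ 2 * Fvarphi g ^ 2,
         Fvarphi g.+1 = 4 * Fphi g ^ 2 * Fvarphi g * Ftheta g + 4 * Fphi g * Fvarphi g ^ 3 &
         Ftheta g.+1 = 2 * Fphi g ^ 2 * Ftheta g ^ 2 + 2 * Fvarphi g ^ 4
                       + 12 * Fphi g * Fvarphi g ^ 2 * Ftheta g]].
Proof.
have [a b c] := F_W (isT : 1 <= 1).
rewrite a b c !W1; split => // g Hg.
have [a1 b1 c1] := F_W Hg.
have [a2 b2 c2] := F_W (isT : 1 <= g.+1).
have [Hs _ _ _] := W_props Hg.
by rewrite a1 b1 c1 a2 b2 c2 W_S // T_ff // T_tf // T_tt.
Qed.
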